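(* Let $X$ be a zero-dimensional Lindel\''of space. Then $X$ has the star-Hurewicz property if and only if $X$ has the Hurewicz property.
   Context: A space is zero-dimensional if it has a base of clopen sets. $St(A,\mathcal{P})=\bigcup\{P\in\mathcal{P}: P\cap A\ne\emptyset\}$. $X$ has the Hurewicz property if for each sequence $\langle\mathcal{U}_n\rangle$ of open covers there are finite $\mathcal{V}_n\subseteq\mathcal{U}_n$ such that each $x\in X$ belongs to $\bigcup\mathcal{V}_n$ for all but finitely many $n$. $X$ has the star-Hurewicz property if for each sequence $\langle\mathcal{U}_n\rangle$ of open covers there are finite $\mathcal{V}_n\subseteq\mathcal{U}_n$ such that each $x\in X$ belongs to $St(\bigcup\mathcal{V}_n,\mathcal{U}_n)$ for all but finitely many $n$. *)

(* Defs.v *)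
From HB Require Import structures.
From mathcomp Require Import all_boot all_order all_algebra.
From mathcomp Require Import all_classical all_reals all_analysis.
Set Implicit Arguments. Unset Strict Implicit. Unset Printing Implicit Defensive.
Local Open Scope classical_set_scope.

Section Defs.
Context {T : topologicalType}.

Definition open_cover (U : set (set T)) : Prop :=
  U `<=` open /\ [set: T] `<=` \bigcup_(A in U) A.

Definition zero_dim_space : Prop :=
  exists B : set (set T), B `<=` clopen /\ basis B.

Definition lindelof_space : Prop :=
  forall U, open_cover U ->
    exists2 V : set (set T), V `<=` U & countable V /\ [set: T] `<=` \bigcup_(A in V) A.

Definition star (A : set T) (P : set (set T)) : set T :=
  \bigcup_(B in [set B | P B /\ B `&` A !=set0]) B.

Definition hurewicz_space : Prop :=
  forall U : nat -> set (set T), (forall n, open_cover (U n)) ->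
    exists V : nat -> set (set T),
      (forall n, V n `<=` U n /\ finite_set (V n)) /\
      (forall x, exists N, forall n, (N <= n)%N -> (\bigcup_(A in V n) A) x).

Definition star_hurewicz_space : Prop :=
  forall U : nat -> set (set T), (forall n, open_cover (U n)) ->
    exists V : nat -> set (set T),
      (forall n, V n `<=` U n /\ finite_set (V n)) /\
      (forall x, exists N, forall n, (N <= n)%N ->
         star (\bigcup_(A in V n) A) (U n) x).
End Defs.

(* Main.v *)
Require Import Defs.
From mathcomp Require Import all_boot all_order all_algebra.
From mathcomp Require Import all_classical all_reals all_analysis.
Local Open Scope classical_set_scope.

Section Refine.
Variable X : topologicalType.
Hypothesis zd : @zero_dim_space X.
Hypothesis lin : @lindelof_space X.

Lemma refine (U : set (set X)) : open_cover U ->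
  exists P : set (set X), exists h : set X -> set X,
    open_cover P /\ (forall A B, P A -> P B -> A `&` B !=set0 -> A = B) /\
    (forall A, P A -> U (h A) /\ A `<=` h A).
Proof.
move=> [Uo Ucov].
have [Bs [Bcl [_ Bb]]] := zd.
pose C := [set A : set X | clopen A /\ exists2 B, U B & A `<=` B].
have Ccov : open_cover C.
  split; first by move=> A [[]].
  move=> x _; have [B UB Bx] := Ucov x I.
  have nB : nbhs x B by apply: open_nbhs_nbhs; split => //; exact: Uo.
  have [A [BsA Ax] AB] := Bb x B nB.
  by exists A => //; split; [exact: Bcl | exists B].
have [V VC [Vc Vcov]] := lin _ Ccov.
have [f finj] := countable_injP _ Vc.
pose g (k : nat) : set X := match pselect (exists A, V A /\ f A = k) with
  | left e => proj1_sig (cid e)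
  | right _ => set0 end.
have gspec k : g k = set0 \/ (V (g k) /\ f (g k) = k).
  rewrite /g; case: pselect => [e|_]; last by left.
  by right; case: cid.
have gf A : V A -> g (f A) = A.
  move=> VA; rewrite /g; case: pselect => [e|]; last by move=> ne; exfalso; apply: ne; exists A.
  case: cid => A' [VA' fA'] /=.
  by apply: finj; rewrite ?inE.
have gcl k : closed (g k).
  by case: (gspec k) => [->|[Vg _]]; [exact: closed0 | case: (VC _ Vg) => -[]].
have gop k : open (g k).
  by case: (gspec k) => [->|[Vg _]]; [exact: open0 | case: (VC _ Vg) => -[]].
pose fix S k := if k is k'.+1 then S k' `|` g k' else set0.
have Scl k : closed (S k) by elim: k => [|k IH] /=; [exact: closed0 | exact: closedU].
have SP k x : S k x <-> exists2 i, (i < k)%N & g i x.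
  elim: k => [|k IH] /=; first by split => // -[].
  split; first by case => [/IH [i ik gi]|gk]; [exists i => //; exact: ltnW|exists k].
  move=> [i]; rewrite ltnS leq_eqVlt => /orP [/eqP -> |ik] gi; first by right.
  by left; apply/IH; exists i.
pose D k := g k `&` ~` S k.
pose P := (fun A => D (f A)) @` V.
have Pchoice : forall A, exists B, P A -> U B /\ A `<=` B.
  move=> A; case: (pselect (P A)) => [[A' VA' <-]|nP]; last first.
    by exists set0 => /nP.
  have [_ [B UB A'B]] := VC _ VA'.
  exists B => _; split => // x [+ _]; rewrite gf //; exact: A'B.
have [h hP] := choice Pchoice.
exists P, h; split; [split|split].
- move=> _ [A VA <-]; apply: openI => //; exact: closed_openC.
- move=> x _.
  suff: forall k, g k x -> exists j, D j x.
    have [A VA Ax] := Vcov x I.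
    move=> /(_ (f A)); rewrite gf // => /(_ Ax) [j Dj].
    case: (gspec j) => [g0|[Vg fg]]; first by case: Dj; rewrite g0.
    by exists (D j) => //; exists (g j) => //; rewrite fg.
  elim/ltn_ind => k IH gk.
  case: (pselect (S k x)) => [/SP [i ik gi]|nS]; first exact: IH gi.
  by exists k.
- move=> _ _ [A VA <-] [B VB <-] [x [[gA nSA] [gB nSB]]].
  have: f A = f B.
    case: (ltngtP (f A) (f B)) => // lt; exfalso.
      by apply: nSB; apply/SP; exists (f A).
    by apply: nSA; apply/SP; exists (f B).
  by move=> ->.
- by move=> A PA; apply: hP.
Qed.
End Refine.

Theorem mainTheorem15 (X : topologicalType) :
  @zero_dim_space X -> @lindelof_space X ->
  (@star_hurewicz_space X <-> @hurewicz_space X).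
Proof.
move=> zd lin; split; last first.
  move=> H U Uc; have [V [VU Vx]] := H U Uc; exists V; split => // x.
  have [N HN] := Vx x; exists N => n /HN [A VA Ax].
  exists A => //; split; [exact: (proj1 (VU n)) | by exists x; split => //; exists A].
move=> SH U Uc.
have [Ph Hph] := choice (fun n => @refine X zd lin _ (Uc n)).
have [h Hh] := choice Hph.
have [V [VP Vx]] := SH Ph (fun n => proj1 (Hh n)).
exists (fun n => h n @` V n); split.
  move=> n; split; last exact: finite_image (proj2 (VP n)).
  by move=> _ [A VA <-]; apply: (proj1 ((proj2 (proj2 (Hh n))) A (proj1 (VP n) A VA))).
move=> x; have [N HN] := Vx x; exists N => n /HN [B [PB [y [By [A VA Ay]]]] Bx].
have PA := proj1 (VP n) A VA.
have BA : B = A by apply: (proj1 (proj2 (Hh n))) => //; exists y.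
exists (h n A); first by exists A.
by apply: (proj2 ((proj2 (proj2 (Hh n))) A PA)); rewrite -BA.
Qed.
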